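(* Let $P$ be a poset. If $P$ is well-quasi-ordered and the quasi-ordered set $(S_\omega(P);\leq_{dom})$ is better-quasi-ordered, then $P$ is better-quasi-ordered.
   Context: $S_\omega(P)$ is the set of strictly increasing sequences $x_0<x_1<\cdots$ of elements of $P$, each identified with its set of terms. For subsets $X,Y\subseteq P$, $X\leq_{dom} Y$ means that for every $x\in X$ there is $y\in Y$ with $x\leq y$ (a quasi-order). A quasi-ordered set is well-quasi-ordered (wqo) if it is well-founded and has no infinite antichain. Barriers and bqo: finite subsets of $\mathbb{N}$ are identified with their increasing enumerations. For finite $s,t\subseteq\mathbb{N}$ write $s\triangleleft t$ if there is a finite $r\subseteq\mathbb{N}$ such that $s$ is a proper initial segment of $r$ and $t$ is $r$ with its least element removed. A barrier is an infinite set $B$ of finite subsets of $\mathbb{N}$, no member of which is a proper subset of another, such that every infinite $X\subseteq\bigcup B$ has a nonempty initial segment belonging to $B$. A barrier is well-ordered by the lexicographic order; its order type is the type of this well-order. A map $f$ from a barrier $B$ into a quasi-ordered set $Q$ is good if there exist $s,t\in B$ with $s\triangleleft t$ and $f(s)\leq f(t)$, and bad otherwise. For a countable ordinal $\alpha$, $Q$ is $\alpha$-better-quasi-ordered ($\alpha$-bqo) if every map from a barrier of order type at most $\alpha$ into $Q$ is good; $Q$ is better-quasi-ordered (bqo) if it is $\alpha$-bqo for every countable ordinal $\alpha$. *)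

(* Defs.v *)
From mathcomp Require Import all_boot.
Set Implicit Arguments. Unset Strict Implicit. Unset Printing Implicit Defensive.

(* Finite subsets of nat are represented by their increasing enumerations:
   strictly increasing (sorted ltn) sequences of nat. *)

Definition tri (s t : seq nat) : Prop :=
  exists r : seq nat, sorted ltn r /\
    (exists k, k < size r /\ s = take k r) /\ t = behead r.

(* Barriers. An infinite subset X of nat is given by its strictly increasing
   enumeration f; its nonempty initial segments are mkseq f k, k >= 1. *)
Definition is_barrier (B : seq nat -> Prop) : Prop :=
  (forall s, B s -> sorted ltn s) /\
  (~ exists l : seq (seq nat), forall s, B s -> s \in l) /\
  (forall s t, B s -> B t -> {subset s <= t} -> s = t) /\
  (forall f : nat -> nat, (forall n, f n < f n.+1) ->
     (forall n, exists s, B s /\ f n \in s) ->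
     exists k, 0 < k /\ B (mkseq f k)).

Definition good (Q : Type) (R : Q -> Q -> Prop) (B : seq nat -> Prop)
  (f : seq nat -> Q) : Prop :=
  exists s t, B s /\ B t /\ tri s t /\ R (f s) (f t).

(* Q is bqo iff it is alpha-bqo for every countable ordinal alpha; since every
   barrier has a countable order type this means: every map from every
   barrier into Q is good. *)
Definition bqo (Q : Type) (R : Q -> Q -> Prop) : Prop :=
  forall B, is_barrier B -> forall f : seq nat -> Q, good R B f.

Definition wqo (Q : Type) (R : Q -> Q -> Prop) : Prop :=
  well_founded (fun x y => R x y /\ ~ R y x) /\
  ~ (exists g : nat -> Q, forall i j, i <> j -> ~ R (g i) (g j)).

Definition Somega (P : Type) (le : P -> P -> Prop) : Type :=
  { x : nat -> P | forall n, le (x n) (x n.+1) /\ x n <> x n.+1 }.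

Definition dom_le (P : Type) (le : P -> P -> Prop) (X Y : Somega le) : Prop :=
  forall i, exists j, le (proj1_sig X i) (proj1_sig Y j).

(* Main.v *)
Require Import Defs.
From mathcomp Require Import all_boot.
From Stdlib Require Import Classical ClassicalEpsilon FunctionalExtensionality.
Set Implicit Arguments. Unset Strict Implicit. Unset Printing Implicit Defensive.

Definition inc (h : nat -> nat) := forall n, h n < h n.+1.
Definition sub (h Y : nat -> nat) := forall n, exists m, h n = Y m.
Definition agree n (h h' : nat -> nat) := forall i, i < n -> h i = h' i.
Definition ccat (u : seq nat) (z : nat -> nat) i :=
  if i < size u then nth 0 u i else z (i - size u).
Definition above (u : seq nat) (z : nat -> nat) := forall x, x \in u -> x < z 0.
Definition tailf (Y : nat -> nat) m := fun i => Y (i + m.+1).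

Lemma inc_lt h i j : inc h -> i < j -> h i < h j.
Proof. move=> H; exact: (homo_ltn ltn_trans H). Qed.
Lemma inc_le h i j : inc h -> i <= j -> h i <= h j.
Proof. move=> H; exact: (homo_leq leqnn leq_trans (fun i => ltnW (H i))). Qed.
Lemma inc_id h i : inc h -> i <= h i.
Proof. move=> H; elim: i => // i IH; exact: leq_ltn_trans IH (H i). Qed.
Lemma inc_ltE h i j : inc h -> (h i < h j) = (i < j).
Proof.
move=> H; case: (ltnP i j) => [/(inc_lt H)->//|/(inc_le H)]; by rewrite leqNgt => /negbTE.
Qed.
Lemma inc_injE h i j : inc h -> h i = h j -> i = j.
Proof.
move=> H E; case: (ltngtP i j) => // /(inc_lt H); by rewrite E ltnn.
Qed.
Lemma sub_refl h : sub h h. Proof. by move=> n; exists n. Qed.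
Lemma sub_trans a b c : sub a b -> sub b c -> sub a c.
Proof. move=> H1 H2 n; case: (H1 n) => m ->; exact: H2. Qed.

Lemma inc_shift h : inc h -> inc (fun i => h i.+1). Proof. by move=> H i. Qed.
Lemma sub_shift h : sub (fun i => h i.+1) h. Proof. by move=> n; exists n.+1. Qed.
Lemma inc_tailf Y m : inc Y -> inc (tailf Y m).
Proof. by move=> H i; rewrite /tailf addSn. Qed.
Lemma sub_tailf Y m : sub (tailf Y m) Y. Proof. by move=> n; exists (n + m.+1). Qed.
Lemma tailf_gt Y m i : inc Y -> m < tailf Y m i.
Proof. move=> H; rewrite /tailf; apply: leq_trans (inc_id _ H); by rewrite addnS ltnS leq_addl. Qed.


Fixpoint subs (l : seq nat) : seq (seq nat) :=
  if l is x :: l' then subs l' ++ map (cons x) (subs l') else [:: [::]].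

Lemma mem_subs l u : (u \in subs l) = subseq u l.
Proof.
elim: l u => [|x l IH] u /=; first by case: u.
rewrite mem_cat IH; case: u => [|y u] /=; first by rewrite sub0seq.
case: eqP => [->|ne].
  apply/orP/idP => [[/cons_subseq//|/mapP[v]]|H]; last by right; apply/mapP; exists u; rewrite // IH.
  by rewrite IH => H [->].
apply/orP/idP => [[//|/mapP[v _ [E _]]]|H]; [by case: ne| by left].
Qed.

Lemma sorted_sub_subseq (u l : seq nat) :
  sorted ltn u -> sorted ltn l -> {subset u <= l} -> subseq u l.
Proof.
move=> su sl ul.
have -> : u = filter (mem u) l.
  apply: (@irr_sorted_eq _ ltn ltn_trans) => //; try (by move=> ?; rewrite /= ltnn);
    try exact: (sorted_filter ltn_trans _ sl).
  move=> x; rewrite mem_filter /=; case E: (x \in u) => //=; by rewrite ul.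
exact: filter_subseq.
Qed.

Lemma mem_subs_sorted (u l : seq nat) :
  sorted ltn u -> sorted ltn l -> {subset u <= l} -> u \in subs l.
Proof. by move=> *; rewrite mem_subs; apply: sorted_sub_subseq. Qed.

Lemma subs_prop (u l : seq nat) : u \in subs l -> sorted ltn l -> sorted ltn u /\ {subset u <= l}.
Proof.
rewrite mem_subs => H sl; split; first exact: (subseq_sorted ltn_trans H sl).
exact: mem_subseq.
Qed.

Lemma mem_mkseqP (h : nat -> nat) (n x : nat) : reflect (exists2 i, i < n & x = h i) (x \in mkseq h n).
Proof.
apply: (iffP mapP) => [[i]|[i]]; rewrite ?mem_iota => ? ->; exists i => //; by rewrite mem_iota.
Qed.

Lemma sorted_rcons_lt (u : seq nat) y x : sorted ltn (rcons u y) -> x \in u -> x < y.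
Proof.
move=> S xu.
have : subseq ([:: x] ++ [:: y]) (u ++ [:: y]) by apply: cat_subseq; rewrite ?sub1seq ?inE ?eqxx.
rewrite cats1 => H; have := subseq_sorted ltn_trans H S; by rewrite /= andbT.
Qed.

Lemma sorted_rconsI (u : seq nat) y : sorted ltn (rcons u y) -> sorted ltn u.
Proof. move=> S; exact: (subseq_sorted ltn_trans (subseq_rcons u y) S). Qed.

Lemma sorted_rcons_intro (u : seq nat) y : sorted ltn u -> (forall x, x \in u -> x < y) -> sorted ltn (rcons u y).
Proof.
case: u => //= a u; rewrite rcons_path => -> /= H; apply: H.
exact: mem_last.
Qed.

Lemma sorted_mkseq h n : inc h -> sorted ltn (mkseq h n).
Proof.
move=> H; elim: n => // n IH; rewrite mkseqS; apply: sorted_rcons_intro => // x /mem_mkseqP [i Hi ->].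
exact: inc_lt.
Qed.

Lemma ccat_lt u z i : i < size u -> ccat u z i = nth 0 u i.
Proof. by rewrite /ccat => ->. Qed.
Lemma ccat_ge u z i : ccat u z (i + size u) = z i.
Proof. by rewrite /ccat ltnNge leq_addl /= addnK. Qed.

Lemma mkseq_ccat u z : mkseq (ccat u z) (size u) = u.
Proof.
apply: (@eq_from_nth _ 0); rewrite size_mkseq // => i Hi.
by rewrite nth_mkseq // ccat_lt.
Qed.

Lemma ccat_mkseq h n : ccat (mkseq h n) (fun i => h (i + n)) = h.
Proof.
apply: functional_extensionality => i; rewrite /ccat size_mkseq.
case: ltnP => H; first by rewrite nth_mkseq.
by rewrite subnK.
Qed.

Lemma agree_ccat u z h : u = mkseq h (size u) -> agree (size u) (ccat u z) h.
Proof. by move=> E i Hi; rewrite ccat_lt // E nth_mkseq -?E. Qed.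

Lemma agree_ccat2 u z z' : agree (size u) (ccat u z) (ccat u z').
Proof. by move=> i Hi; rewrite !ccat_lt. Qed.

Lemma inc_ccat u z : sorted ltn u -> above u z -> inc z -> inc (ccat u z).
Proof.
move=> su ab iz i; rewrite /ccat.
case: (ltnP i.+1 (size u)) => H1.
  rewrite (ltnW H1); apply: (sorted_ltn_nth ltn_trans 0 su); by rewrite ?inE // ltnW.
case: (ltnP i (size u)) => H2.
  have E : i.+1 = size u by apply/eqP; rewrite eqn_leq H1 H2.
  rewrite E subnn; apply: ab; rewrite mem_nth //.
by rewrite subSn.
Qed.

Lemma sub_ccat u z Y : (forall x, x \in u -> exists m, x = Y m) -> sub z Y -> sub (ccat u z) Y.
Proof.
move=> Hu Hz i; rewrite /ccat; case: ltnP => H; last exact: Hz.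
by apply: Hu; rewrite mem_nth.
Qed.

Lemma ccat_rcons u z : ccat u z = ccat (rcons u (z 0)) (fun i => z i.+1).
Proof.
apply: functional_extensionality => i; rewrite /ccat size_rcons nth_rcons.
case: (ltngtP i (size u)) => H.
- by rewrite ltnS ltnW.
- by rewrite ltnS leqNgt H /= subnS prednK // subn_gt0.
- by rewrite H ltnSn subnn.
Qed.

Lemma agree_le n m h h' : m <= n -> agree n h h' -> agree m h h'.
Proof. by move=> le A i Hi; apply: A; exact: leq_trans Hi le. Qed.
Lemma agree_sym n h h' : agree n h h' -> agree n h' h.
Proof. by move=> A i Hi; rewrite A. Qed.
Lemma agree_trans n h1 h2 h3 : agree n h1 h2 -> agree n h2 h3 -> agree n h1 h3.
Proof. by move=> A B i Hi; rewrite A ?B. Qed.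
Lemma agree_mkseq n h h' : agree n h h' -> mkseq h n = mkseq h' n.
Proof. move=> A; apply/eq_in_map => i; rewrite mem_iota /= => Hi; exact: A. Qed.
Lemma mkseq_agree n h h' : mkseq h n = mkseq h' n -> agree n h h'.
Proof. move=> E i Hi; by rewrite -(nth_mkseq 0 h Hi) E nth_mkseq. Qed.

Lemma le_last (u : seq nat) x d : sorted ltn u -> x \in u -> x <= last d u.
Proof.
case/lastP: u => [//|u y]; rewrite last_rcons mem_rcons inE => S /orP[/eqP->//|xu].
exact/ltnW/(sorted_rcons_lt S xu).
Qed.

Section Fusion.
Variable Q : seq nat -> (nat -> nat) -> Prop.
Hypothesis Qup : forall u Y Y', (forall z, inc z -> sub z Y -> above u z -> sub z Y') -> Q u Y' -> Q u Y.

Lemma Qmono u Y Y' : sub Y Y' -> Q u Y' -> Q u Y.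
Proof. move=> S; apply: Qup => z _ Hz _; exact: sub_trans Hz S. Qed.

Definition dich u Y := Q u Y \/ forall Y', inc Y' -> sub Y' Y -> ~ Q u Y'.

Lemma dich_sub u Y Y' : sub Y Y' -> dich u Y' -> dich u Y.
Proof.
move=> S [H|H]; [left; exact: Qmono S H|right => Y2 I2 S2; apply: H I2 (sub_trans S2 S)].
Qed.

Definition handle1 u Y : nat -> nat :=
  match excluded_middle_informative (exists Y', inc Y' /\ sub Y' Y /\ Q u Y') with
  | left H => proj1_sig (constructive_indefinite_description _ H)
  | right _ => Y end.

Lemma handle1_spec u Y : inc Y -> inc (handle1 u Y) /\ sub (handle1 u Y) Y /\ dich u (handle1 u Y).
Proof.
move=> IY; rewrite /handle1; case: excluded_middle_informative => [H|H].
  case: (constructive_indefinite_description _ H) => Y' [I' [S' Q']] /=.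
  by split => //; split => //; left.
split => //; split; first exact: sub_refl.
right => Y' I' S' Q'; apply: H; by exists Y'.
Qed.

Definition handle (l : seq (seq nat)) Y := foldr handle1 Y l.

Lemma handle_spec l Y : inc Y -> inc (handle l Y) /\ sub (handle l Y) Y /\
  forall u, u \in l -> dich u (handle l Y).
Proof.
move=> IY; elim: l => [|u l [I1 [S1 D1]]] /=.
  by split => //; split => //; exact: sub_refl.
have [I2 [S2 D2]] := handle1_spec u I1.
split => //; split; first exact: sub_trans S2 S1.
move=> v; rewrite inE => /orP[/eqP->//|vl]; exact: dich_sub S2 (D1 v vl).
Qed.

Variable Y0 : nat -> nat.
Hypothesis IY0 : inc Y0.

Definition stp (p : nat * (nat -> nat)) :=
  let c := handle (subs (iota 0 p.1)) p.2 in ((c 0).+1, fun i => c i.+1).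
Fixpoint st k := if k is k'.+1 then stp (st k') else (0, Y0).
Definition cur k := handle (subs (iota 0 (st k).1)) (st k).2.
Definition yy k := cur k 0.

Lemma st_inc k : inc (st k).2 /\ sub (st k).2 Y0.
Proof.
elim: k => [|k [I S]] /=; first by split => //; exact: sub_refl.
have [I1 [S1 _]] := handle_spec (subs (iota 0 (st k).1)) I.
split; first exact: inc_shift.
exact: sub_trans (sub_shift _) (sub_trans S1 S).
Qed.

Lemma cur_spec k : inc (cur k) /\ sub (cur k) Y0 /\ forall u, u \in subs (iota 0 (st k).1) -> dich u (cur k).
Proof.
have [I S] := st_inc k; have [I1 [S1 D1]] := handle_spec (subs (iota 0 (st k).1)) I.
split => //; split => //; exact: sub_trans S1 S.
Qed.

Lemma cur_sub k d : sub (cur (k + d)) (cur k).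
Proof.
elim: d => [|d IH]; first by rewrite addn0; exact: sub_refl.
apply: (sub_trans _ IH); rewrite addnS.
have [I S] := st_inc (k + d).+1; have [I1 [S1 _]] := handle_spec (subs (iota 0 (st (k + d).+1).1)) I.
exact: (sub_trans S1 (sub_shift (cur (k + d)))).
Qed.

Lemma yy_in k j : k <= j -> exists m, yy j = cur k m.
Proof. move=> kj; rewrite -(subnKC kj); exact: (cur_sub k (j - k) 0). Qed.

Lemma yy_inc : inc yy.
Proof.
move=> k; rewrite /yy.
have [I S] := st_inc k.+1; have [I1 [S1 _]] := handle_spec (subs (iota 0 (st k.+1).1)) I.
have [m Em] := S1 0; have Em' : cur k.+1 0 = cur k m.+1 := Em; rewrite Em'.
have [Ik _] := cur_spec k.
exact: (leq_trans (Ik 0) (inc_le Ik (ltn0Sn m))).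
Qed.

Lemma yy_sub : sub yy Y0.
Proof. move=> k; have [_ [S _]] := cur_spec k; exact: S 0. Qed.

Theorem fusion : exists Y1, inc Y1 /\ sub Y1 Y0 /\
  forall u, sorted ltn u -> (forall x, x \in u -> exists m, x = Y1 m) ->
    Q u Y1 \/ forall Y', inc Y' -> sub Y' Y1 -> above u Y' -> ~ Q u Y'.
Proof.
exists yy; split; first exact: yy_inc; split; first exact: yy_sub.
move=> u su Hu.
have [k [uin tr]] : exists k, u \in subs (iota 0 (st k).1) /\
   forall z, inc z -> sub z yy -> above u z -> sub z (cur k).
  case/lastP E: u => [|u' a].
    exists 0; split => //= z Iz Sz _ n; have [j ->] := Sz n; exact: yy_in.
  have [k' Ek'] : exists k', a = yy k' by apply: Hu; rewrite E mem_rcons inE eqxx.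
  exists k'.+1; split.
    apply: mem_subs_sorted; rewrite -?E //; first exact: iota_ltn_sorted.
    move=> x xu; rewrite mem_iota leq0n /= add0n; change (x < (yy k').+1); rewrite ltnS -Ek'.
    by have := le_last 0 su xu; rewrite E last_rcons.
  move=> z Iz Sz Ab n; have [j Ej] := Sz n; rewrite Ej; apply: yy_in.
  have au : a \in rcons u' a by rewrite mem_rcons inE eqxx.
  have := leq_trans (Ab a au) (inc_le Iz (leq0n n)).
  by rewrite Ej Ek' (inc_ltE _ _ yy_inc).
have [_ [_ D]] := cur_spec k.
case: (D u uin) => [Qc|NQ]; [left; exact: Qup tr Qc|right => Y' I' S' A' Q'].
exact: NQ I' (tr _ I' S' A') Q'.
Qed.
End Fusion.

Lemma le_sumn (s : seq nat) x : x \in s -> x <= sumn s.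
Proof.
elim: s => //= a s IH; rewrite inE => /orP[/eqP->|/IH H]; first exact: leq_addr.
exact: leq_trans H (leq_addl _ _).
Qed.

Lemma cofin_list (X : eqType) (l : seq X) (P : X -> nat -> Prop) :
  (forall x, x \in l -> exists N, forall j, N <= j -> P x j) ->
  exists N, forall j, N <= j -> forall x, x \in l -> P x j.
Proof.
elim: l => [|a l IH] H; first by exists 0.
have [N1 H1] := H a (mem_head _ _).
have [N2 H2] : exists N, forall j, N <= j -> forall x, x \in l -> P x j.
  by apply: IH => x xl; apply: H; rewrite inE xl orbT.
exists (maxn N1 N2) => j Hj x; rewrite inE => /orP[/eqP->|xl].
  by apply: H1; apply: leq_trans Hj; exact: leq_maxl.
by apply: H2 => //; apply: leq_trans Hj; exact: leq_maxr.
Qed.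

Lemma ccat_nil z : ccat [::] z = z.
Proof. by apply: functional_extensionality => i; rewrite /ccat /= subn0. Qed.

Section NW.
Variable Y0 : nat -> nat.
Hypothesis IY0 : inc Y0.
Variable kap : (nat -> nat) -> bool.
Hypothesis cont : forall h, inc h -> sub h Y0 -> exists n, forall h', inc h' -> sub h' Y0 ->
  agree n h h' -> kap h' = kap h.

Definition Qa u Y := forall z, inc z -> sub z Y -> above u z -> kap (ccat u z) = true.

Lemma Qa_up u Y Y' : (forall z, inc z -> sub z Y -> above u z -> sub z Y') -> Qa u Y' -> Qa u Y.
Proof. by move=> H Q z Iz Sz Az; apply: Q => //; apply: H. Qed.

Section Rej.
Variable Y1 : nat -> nat.
Hypothesis IY1 : inc Y1.
Hypothesis SY1 : sub Y1 Y0.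
Hypothesis D1 : forall u, sorted ltn u -> (forall x, x \in u -> exists m, x = Y1 m) ->
    Qa u Y1 \/ forall Y', inc Y' -> sub Y' Y1 -> above u Y' -> ~ Qa u Y'.

Definition Rj u := forall Y', inc Y' -> sub Y' Y1 -> above u Y' -> ~ Qa u Y'.

Lemma ext u : sorted ltn u -> (forall x, x \in u -> exists m, x = Y1 m) -> Rj u ->
  exists N, forall j, N <= j -> Rj (rcons u (Y1 j)).
Proof.
move=> su Hu Ru; apply: NNPP => NE.
set M := sumn u.
have Hacc : forall N, exists j, N <= j /\ Qa (rcons u (Y1 j)) Y1.
  move=> N; apply: NNPP => NEx; apply: NE; exists (maxn N M.+1) => j Hj.
  have lt : forall x, x \in u -> x < Y1 j.
    move=> x xu; apply: leq_ltn_trans (le_sumn xu) _.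
    apply: leq_trans (inc_id _ IY1); apply: leq_trans Hj; exact: leq_maxr.
  have sj : sorted ltn (rcons u (Y1 j)) by apply: sorted_rcons_intro.
  have Hj' : forall x, x \in rcons u (Y1 j) -> exists m, x = Y1 m.
    by move=> x; rewrite mem_rcons inE => /orP[/eqP->|/Hu//]; exists j.
  case: (D1 sj Hj') => // Qj; case: NEx; exists j; split => //.
  apply: leq_trans Hj; exact: leq_maxl.
pose g N := proj1_sig (constructive_indefinite_description _ (Hacc N)).
have gP : forall N, N <= g N /\ Qa (rcons u (Y1 (g N))) Y1.
  by move=> N; rewrite /g; case: constructive_indefinite_description.
pose G := fix G n := if n is n'.+1 then g (G n').+1 else g M.+1.
have IG : inc G by move=> n /=; exact: (gP _).1.
have GQ : forall n, Qa (rcons u (Y1 (G n))) Y1 by case=> [|n] /=; exact: (gP _).2.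
pose Y' := fun n => Y1 (G n).
have IY' : inc Y' by move=> n; rewrite /Y' (inc_ltE _ _ IY1).
have SY' : sub Y' Y1 by move=> n; exists (G n).
have AY' : above u Y'.
  move=> x xu; apply: leq_ltn_trans (le_sumn xu) _; rewrite /Y'.
  apply: leq_trans (inc_id _ IY1); exact: (gP _).1.
apply: (Ru Y' IY' SY' AY') => z Iz Sz Az.
rewrite ccat_rcons; have [m Em] := Sz 0; rewrite Em.
apply: GQ; first exact: inc_shift.
  by move=> n; have [k Ek] := Sz n.+1; rewrite Ek; exists (G k).
have Em' : z 0 = Y1 (G m) := Em.
move=> x; rewrite mem_rcons inE => /orP[/eqP->|xu]; first by have := Iz 0; rewrite Em'.
exact: ltn_trans (Az x xu) (Iz 0).
Qed.
End Rej.

Section Diag.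
Variable Y1 : nat -> nat.
Hypothesis IY1 : inc Y1.
Hypothesis SY1 : sub Y1 Y0.
Hypothesis D1 : forall u, sorted ltn u -> (forall x, x \in u -> exists m, x = Y1 m) ->
    Qa u Y1 \/ forall Y', inc Y' -> sub Y' Y1 -> above u Y' -> ~ Qa u Y'.
Hypothesis R0 : Rj Y1 [::].

Definition Cw (ws : seq nat) j := (forall x, x \in ws -> x < Y1 j) /\
  forall u, sorted ltn u -> {subset u <= ws} -> Rj Y1 (rcons u (Y1 j)).

Definition nxt ws := match excluded_middle_informative (exists j, Cw ws j) with
  | left H => proj1_sig (constructive_indefinite_description _ H)
  | right _ => 0 end.

Fixpoint wss k := if k is k'.+1 then rcons (wss k') (Y1 (nxt (wss k'))) else [::].

Definition Inv ws := sorted ltn ws /\ (forall x, x \in ws -> exists m, x = Y1 m) /\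
  (forall u, sorted ltn u -> {subset u <= ws} -> Rj Y1 u).

Lemma Cw_ex ws : Inv ws -> exists j, Cw ws j.
Proof.
move=> [sw [rw Rw]].
have [N HN] : exists N, forall j, N <= j -> forall u, u \in subs ws -> Rj Y1 (rcons u (Y1 j)).
  apply: cofin_list => u /subs_prop /(_ sw) [su uw].
  apply: ext => //; last exact: Rw.
  by move=> x /uw; apply: rw.
exists (maxn N (sumn ws).+1); split.
  move=> x xw; apply: leq_ltn_trans (le_sumn xw) _.
  apply: leq_trans (inc_id _ IY1); exact: leq_maxr.
move=> u su uw; apply: HN; first exact: leq_maxl.
exact: mem_subs_sorted.
Qed.

Lemma nxtP ws : Inv ws -> Cw ws (nxt ws).
Proof.
move=> I; rewrite /nxt; case: excluded_middle_informative => [H|H].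
  by case: constructive_indefinite_description.
by case: H; apply: Cw_ex.
Qed.

Lemma Inv_wss k : Inv (wss k).
Proof.
elim: k => [|k IH] /=.
  split => //; split => // u su /= uw.
  have -> : u = [::] by case: u uw su => // a u /(_ a (mem_head _ _)).
  exact: R0.
have [C1 C2] := nxtP IH; have [sw [rw Rw]] := IH.
set w := Y1 (nxt (wss k)) in C1 C2 *.
split; first exact: sorted_rcons_intro.
split; first by move=> x; rewrite mem_rcons inE => /orP[/eqP->|/rw//]; exists (nxt (wss k)).
move=> u su uw.
case wu: (w \in u); last first.
  apply: Rw => // x xu; have := uw x xu; rewrite mem_rcons inE => /orP[/eqP E|//].
  by move: xu; rewrite E wu.
case/lastP E: u => [|u' y]; first by move: wu; rewrite E.
have yw : y = w.
  apply: NNPP => ne.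
  have : y \in rcons (wss k) w by apply: uw; rewrite E mem_rcons mem_head.
  rewrite mem_rcons inE => /orP[/eqP//|yws].
  have : w \in u' by move: wu; rewrite E mem_rcons inE => /orP[/eqP E'|//]; case: ne.
  have su' : sorted ltn (rcons u' y) by rewrite -E.
  move=> wu'; have := sorted_rcons_lt su' wu'.
  by rewrite ltnNge (ltnW (C1 y yws)).
have su' : sorted ltn (rcons u' y) by rewrite -E.
rewrite yw; apply: C2; first exact: sorted_rconsI su'.
move=> x xu'; have := uw x; rewrite E mem_rcons inE xu' orbT => /(_ isT).
rewrite mem_rcons inE => /orP[/eqP E'|//].
by have := sorted_rcons_lt su' xu'; rewrite yw E' ltnn.
Qed.

Definition ww k := Y1 (nxt (wss k)).

Lemma wss_mkseq k : wss k = mkseq ww k.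
Proof. by elim: k => //= k IH; rewrite mkseqS -IH. Qed.

Lemma ww_inc : inc ww.
Proof.
move=> k; have [C1 _] := nxtP (Inv_wss k.+1); apply: C1.
by rewrite /= mem_rcons mem_head.
Qed.

Lemma ww_sub : sub ww Y1. Proof. by move=> k; exists (nxt (wss k)). Qed.

Lemma ww_false h : inc h -> sub h ww -> kap h = false.
Proof.
move=> Ih Sh; case E: (kap h) => //.
have ShY0 : sub h Y0 by apply: sub_trans Sh (sub_trans ww_sub SY1).
have [n Hn] := cont Ih ShY0.
set u := mkseq h n.
have su : sorted ltn u by exact: sorted_mkseq.
have uw : {subset u <= wss (h n)}.
  move=> x /mem_mkseqP [i Hi ->]; have [m Em] := Sh i; rewrite Em wss_mkseq.
  apply/mem_mkseqP; exists m => //.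
  apply: leq_ltn_trans (inc_id m ww_inc) _; rewrite -Em; exact: inc_lt.
have [_ [rw Rw]] := Inv_wss (h n).
have Ru := Rw u su uw.
exfalso; refine (Ru (tailf Y1 (sumn u)) _ _ _ _); first exact: inc_tailf.
- exact: sub_tailf.
- move=> x xu; apply: leq_ltn_trans (le_sumn xu) _; exact: tailf_gt.
move=> z Iz Sz Az; rewrite -E; apply: Hn.
- by apply: inc_ccat.
- apply: sub_ccat; last by apply: sub_trans Sz (sub_trans (sub_tailf _ _) SY1).
  move=> x /uw /rw [m ->]; exact: SY1.
- apply: agree_sym; have -> : n = size u by rewrite size_mkseq.
  by apply: agree_ccat; rewrite size_mkseq.
Qed.
End Diag.

Theorem NW : exists Y, inc Y /\ sub Y Y0 /\ exists c, forall h, inc h -> sub h Y -> kap h = c.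
Proof.
have [Y1 [IY1 [SY1 D1]]] := fusion Qa_up IY0.
have s0 : sorted ltn [::] by [].
have e0 : forall x, x \in [::] -> exists m, x = Y1 m by [].
case: (D1 [::] s0 e0) => [Q0|R0].
  exists Y1; split => //; split => //; exists true => h Ih Sh.
  by rewrite -(ccat_nil h); apply: Q0.
exists (ww Y1); split; first exact: ww_inc.
split; first exact: sub_trans (ww_sub _) SY1.
exists false => h Ih Sh; exact: (ww_false IY1 SY1 D1 R0 Ih Sh).
Qed.
End NW.

Lemma wf_no_desc (T : Type) (R : T -> T -> Prop) (d : nat -> T) :
  well_founded R -> (forall k, R (d k.+1) (d k)) -> False.
Proof.
move=> wf Hd.
suff : forall x, Acc R x -> forall k, d k = x -> False by move/(_ _ (wf (d 0)) 0 erefl).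
move=> x; elim=> {}x _ IH k E; apply: (IH (d k.+1)) (erefl _); by rewrite -E.
Qed.

Lemma wqo_good (P : Type) (le : P -> P -> Prop) :
  wqo le -> forall g : nat -> P, exists i j, i < j /\ le (g i) (g j).
Proof.
move=> [wf noac] g; apply: NNPP => Hbad.
have bad : forall i j, i < j -> ~ le (g i) (g j).
  by move=> i j ij H; apply: Hbad; exists i, j.
pose mn i := forall j, i < j -> ~ (le (g j) (g i) /\ ~ le (g i) (g j)).
case: (classic (forall N, exists i, N <= i /\ mn i)) => [HA|HB].
  pose c0 N := proj1_sig (constructive_indefinite_description _ (HA N)).
  have c0P : forall N, N <= c0 N /\ mn (c0 N).
    by move=> N; rewrite /c0; case: constructive_indefinite_description.
  pose c := fix c n := if n is n'.+1 then c0 (c n').+1 else c0 0.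
  have cmin : forall n, mn (c n) by case=> [|n]; exact: (c0P _).2.
  have cinc : forall n, c n < c n.+1 by move=> n; exact: (c0P _).1.
  apply: noac; exists (fun n => g (c n)) => i j ne.
  wlog lt : i j ne / i < j.
    move=> W; case: (ltngtP i j) => [/W|ji|E]; [by apply| |by case: ne].
    move=> H; have ij' : c j < c i := homo_ltn ltn_trans cinc ji.
    by apply: (cmin j (c i) ij'); split => //; apply: bad.
  have ij' : c i < c j := homo_ltn ltn_trans cinc lt.
  exact: bad ij'.
have [N HN] : exists N, forall i, N <= i -> ~ mn i.
  apply: NNPP => H; apply: HB => N; apply: NNPP => H2; apply: H; exists N => i Ni mi.
  by apply: H2; exists i.
have step : forall i, N <= i -> exists j, i < j /\ (le (g j) (g i) /\ ~ le (g i) (g j)).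
  move=> i Ni; have := HN i Ni; rewrite /mn => H; apply: NNPP => H2; apply: H => j ij H3.
  by apply: H2; exists j.
pose nx i := match excluded_middle_informative (N <= i) with
  | left H => proj1_sig (constructive_indefinite_description _ (step i H)) | right _ => i end.
have nxP : forall i, N <= i -> i < nx i /\ (le (g (nx i)) (g i) /\ ~ le (g i) (g (nx i))).
  move=> i Ni; rewrite /nx; case: excluded_middle_informative => // H.
  by case: constructive_indefinite_description.
pose d := fix d n := if n is n'.+1 then nx (d n') else N.
have dN : forall n, N <= d n.
  move=> n; elim: n => [|n IH]; first by [].
  apply: (leq_trans IH); exact: ltnW (nxP _ IH).1.
apply: (@wf_no_desc _ _ (fun n => g (d n)) wf) => k /=; exact: (nxP _ (dN k)).2.
Qed.

Definition drp n (h : nat -> nat) := fun i => h (i + n).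

Lemma inc_drp n h : inc h -> inc (drp n h).
Proof. by move=> H i; rewrite /drp addSn. Qed.
Lemma sub_drp n h : sub (drp n h) h. Proof. by move=> i; exists (i + n). Qed.
Lemma above_drp n h : inc h -> above (mkseq h n) (drp n h).
Proof. move=> H x /mem_mkseqP [i Hi ->]; rewrite /drp add0n; exact: inc_lt. Qed.
Lemma drp_ccat u z : drp (size u) (ccat u z) = z.
Proof. apply: functional_extensionality => i; exact: ccat_ge. Qed.

Lemma take_mkseq (h : nat -> nat) k n : k <= n -> take k (mkseq h n) = mkseq h k.
Proof.
move=> kn; by rewrite /mkseq -map_take take_iota (minn_idPl kn).
Qed.

Lemma behead_mkseq (h : nat -> nat) n : behead (mkseq h n.+1) = mkseq (fun i => h i.+1) n.
Proof.
apply: (@eq_from_nth _ 0); rewrite size_behead !size_mkseq // => i Hi.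
by rewrite nth_behead !nth_mkseq.
Qed.

Section Main.
Variables (P : Type) (le : P -> P -> Prop).
Hypothesis le_refl : forall x, le x x.
Hypothesis le_trans : forall x y z, le x y -> le y z -> le x z.
Hypothesis wq : wqo le.
Variable B : seq nat -> Prop.
Hypothesis bB : is_barrier B.
Variable f : seq nat -> P.
Hypothesis badf : forall s t, B s -> B t -> tri s t -> ~ le (f s) (f t).

Lemma B_sorted s : B s -> sorted ltn s. Proof. by case: bB => H _; apply: H. Qed.
Lemma B_anti s t : B s -> B t -> {subset s <= t} -> s = t.
Proof. by case: bB => _ [_ [H _]]; apply: H. Qed.
Lemma B_inf : ~ exists l : seq (seq nat), forall s, B s -> s \in l.
Proof. by case: bB => _ [H _]. Qed.
Lemma B_bar (g : nat -> nat) : inc g -> (forall n, exists s, B s /\ g n \in s) ->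
  exists k, 0 < k /\ B (mkseq g k).
Proof. by case: bB => _ [_ [_ H]]; apply: H. Qed.

Lemma B_nonempty s : B s -> 0 < size s.
Proof.
case: s => // Bn; case: B_inf; exists [:: [::]] => t Bt.
by rewrite (B_anti Bn Bt) ?mem_head.
Qed.

Lemma U_inf m : exists x, m < x /\ exists s, B s /\ x \in s.
Proof.
apply: NNPP => H; apply: B_inf; exists (subs (iota 0 m.+1)) => s Bs.
apply: mem_subs_sorted; [exact: B_sorted|exact: iota_ltn_sorted|].
move=> x xs; rewrite mem_iota leq0n add0n /= ltnS leqNgt; apply/negP => lt; apply: H.
by exists x; split => //; exists s.
Qed.

Definition nextU m := proj1_sig (constructive_indefinite_description _ (U_inf m)).
Lemma nextUP m : m < nextU m /\ exists s, B s /\ nextU m \in s.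
Proof. by rewrite /nextU; case: constructive_indefinite_description. Qed.
Fixpoint a n := if n is n'.+1 then nextU (a n') else nextU 0.
Lemma inc_a : inc a. Proof. by move=> n /=; case: (nextUP (a n)). Qed.
Lemma a_U n : exists s, B s /\ a n \in s.
Proof. case: n => [|n] /=; [exact: (nextUP 0).2|exact: (nextUP (a n)).2]. Qed.

Definition adm h := inc h /\ sub h a.

Lemma Kex h : adm h -> exists k, 0 < k /\ B (mkseq h k).
Proof. move=> [I S]; apply: B_bar => // n; have [m ->] := S n; exact: a_U. Qed.

Definition K h := match excluded_middle_informative (exists k, 0 < k /\ B (mkseq h k)) with
  | left H => proj1_sig (constructive_indefinite_description _ H) | right _ => 0 end.

Lemma KP h : adm h -> 0 < K h /\ B (mkseq h (K h)).
Proof.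
move=> Ad; rewrite /K; case: excluded_middle_informative => [H|H]; last by case: H; apply: Kex.
by case: constructive_indefinite_description.
Qed.

Lemma Kuniq h k k' : inc h -> B (mkseq h k) -> B (mkseq h k') -> k = k'.
Proof.
move=> I; wlog kk : k k' / k <= k'.
  move=> W B1 B2; case: (leqP k k') => H; first exact: W.
  by apply/esym/W => //; exact: ltnW.
move=> B1 B2; have := B_anti B1 B2.
have sb : {subset mkseq h k <= mkseq h k'}.
  move=> x /mem_mkseqP [i Hi ->]; apply/mem_mkseqP; exists i => //; exact: leq_trans Hi kk.
by move=> /(_ sb) /(congr1 size); rewrite !size_mkseq.
Qed.

Lemma Kdet h h' : adm h -> adm h' -> agree (K h) h h' -> K h' = K h.
Proof.
move=> Ah Ah' Ag; have [_ Bh] := KP Ah; have [_ Bh'] := KP Ah'.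
rewrite (agree_mkseq Ag) in Bh; exact: Kuniq (proj1 Ah') Bh' Bh.
Qed.

Definition Phi h := f (mkseq h (K h)).

Lemma Phidet h h' : adm h -> adm h' -> agree (K h) h h' -> Phi h' = Phi h.
Proof. by move=> Ah Ah' Ag; rewrite /Phi (Kdet Ah Ah' Ag) (agree_mkseq Ag). Qed.

Lemma adm_shift h : adm h -> adm (fun i => h i.+1).
Proof. move=> [I S]; split; [exact: inc_shift|exact: sub_trans (sub_shift h) S]. Qed.

Lemma Phibad h : adm h -> ~ le (Phi h) (Phi (fun i => h i.+1)).
Proof.
move=> Ah; have Ah' := adm_shift Ah.
have [k0 Bk] := KP Ah; have [k0' Bk'] := KP Ah'.
set k := K h in k0 Bk *; set k' := K (fun i => h i.+1) in k0' Bk' *.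
have kk : k <= k'.
  rewrite leqNgt; apply/negP => lt.
  have sb : {subset mkseq (fun i => h i.+1) k' <= mkseq h k}.
    by move=> x /mem_mkseqP [i Hi ->]; apply/mem_mkseqP; exists i.+1 => //; exact: leq_ltn_trans Hi lt.
  by have := congr1 size (B_anti Bk' Bk sb); rewrite !size_mkseq => E; move: lt; rewrite E ltnn.
apply: badf Bk Bk' _; exists (mkseq h k'.+1); split; first exact: sorted_mkseq (proj1 Ah).
split; last by rewrite behead_mkseq.
exists k; split; first by rewrite size_mkseq ltnS.
by rewrite take_mkseq // leqW.
Qed.

Definition Qd u Y := forall z z', inc z -> inc z' -> sub z Y -> sub z' Y -> above u z -> above u z' ->
  Phi (ccat u z) = Phi (ccat u z').

Lemma Qd_up u Y Y' : (forall z, inc z -> sub z Y -> above u z -> sub z Y') -> Qd u Y' -> Qd u Y.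
Proof. move=> H Q z z' I I' S S' A A'; apply: Q => //; exact: H. Qed.

Section S1.
Variable Y1 : nat -> nat.
Hypothesis IY1 : inc Y1.
Hypothesis SY1 : sub Y1 a.
Hypothesis D1 : forall u, sorted ltn u -> (forall x, x \in u -> exists m, x = Y1 m) ->
    Qd u Y1 \/ forall Y', inc Y' -> sub Y' Y1 -> above u Y' -> ~ Qd u Y'.

Definition adm1 h := inc h /\ sub h Y1.
Lemma adm1_adm h : adm1 h -> adm h.
Proof. by case=> I S; split => //; exact: sub_trans S SY1. Qed.

Lemma mkseq_range h n : sub h Y1 -> forall x, x \in mkseq h n -> exists m, x = Y1 m.
Proof. by move=> S x /mem_mkseqP [i _ ->]; exact: S. Qed.

Lemma adm1_ccat h n z : adm1 h -> inc z -> sub z Y1 -> above (mkseq h n) z -> adm1 (ccat (mkseq h n) z).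
Proof.
move=> [I S] Iz Sz Az; split; first by apply: inc_ccat => //; exact: sorted_mkseq.
exact: sub_ccat (mkseq_range S) Sz.
Qed.

Lemma adm1_drp h n : adm1 h -> adm1 (drp n h).
Proof. by case=> I S; split; [exact: inc_drp|exact: sub_trans (sub_drp n h) S]. Qed.

Lemma adm1_sub h h' : adm1 h -> inc h' -> sub h' h -> adm1 h'.
Proof. by case=> I S I' S'; split => //; exact: sub_trans S' S. Qed.

Definition decb h n : bool := if excluded_middle_informative (Qd (mkseq h n) Y1) then true else false.
Lemma decbP h n : reflect (Qd (mkseq h n) Y1) (decb h n).
Proof. by rewrite /decb; case: excluded_middle_informative => H; constructor. Qed.

Definition L h := match excluded_middle_informative (exists n, decb h n) with
  | left H => ex_minn H | right _ => 0 end.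

Lemma dec_K h : adm1 h -> Qd (mkseq h (K h)) Y1.
Proof.
move=> Ah z z' I I' S S' A A'.
have Ad := adm1_adm Ah.
have E1 : agree (K h) h (ccat (mkseq h (K h)) z).
  by apply: agree_sym; rewrite -{1}(size_mkseq h (K h)); apply: agree_ccat; rewrite size_mkseq.
have E2 : agree (K h) h (ccat (mkseq h (K h)) z').
  by apply: agree_sym; rewrite -{1}(size_mkseq h (K h)); apply: agree_ccat; rewrite size_mkseq.
rewrite (Phidet Ad _ E1) ?(Phidet Ad _ E2) //; apply: adm1_adm; exact: adm1_ccat.
Qed.

Lemma LP h : adm1 h -> Qd (mkseq h (L h)) Y1 /\ forall n, n < L h -> ~ Qd (mkseq h n) Y1.
Proof.
move=> Ah; rewrite /L; case: excluded_middle_informative => [H|H]; last first.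
  by case: H; exists (K h); apply/decbP; exact: dec_K.
case: ex_minnP => m /decbP Hm Hmin; split => // n nm /decbP Hn.
by have := Hmin _ Hn; rewrite leqNgt nm.
Qed.

Lemma Lhered h n : adm1 h -> n < L h -> forall Y', inc Y' -> sub Y' Y1 -> above (mkseq h n) Y' ->
  ~ Qd (mkseq h n) Y'.
Proof.
move=> Ah nL; have [I S] := Ah.
case: (D1 (sorted_mkseq n I) (mkseq_range S)) => // Q; by case: ((LP Ah).2 n nL).
Qed.

Lemma Ldet h h' : adm1 h -> adm1 h' -> agree (L h) h h' -> L h' = L h /\ Phi h' = Phi h.
Proof.
move=> Ah Ah' Ag; have [Q1 M1] := LP Ah; have [Q2 M2] := LP Ah'.
have E := agree_mkseq Ag.
split.
  apply/eqP; rewrite eqn_leq; apply/andP; split.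
    rewrite leqNgt; apply/negP => lt; apply: (M2 _ lt); by rewrite -E.
  rewrite leqNgt; apply/negP => lt; apply: (M1 _ lt).
  by rewrite (agree_mkseq (agree_le (ltnW lt) Ag)).
have [I S] := Ah; have [I' S'] := Ah'.
rewrite -(ccat_mkseq h (L h)) -(ccat_mkseq h' (L h)) -E.
apply: Q1.
- exact: inc_drp.
- exact: inc_drp.
- exact: sub_trans (sub_drp _ _) S'.
- exact: sub_trans (sub_drp _ _) S.
- by rewrite E; apply: above_drp.
- exact: above_drp.
Qed.

Lemma Lpos h : adm1 h -> 0 < L h.
Proof.
move=> Ah; rewrite lt0n; apply/negP => /eqP L0.
have [Q _] := LP Ah; rewrite L0 /= in Q.
have [I S] := Ah.
have := Q h (fun i => h i.+1) I (inc_shift I) S (sub_trans (sub_shift h) S).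
rewrite !ccat_nil => /(_ (fun _ (H : _ \in [::]) => False_ind _ (notF H))).
move=> /(_ (fun _ (H : _ \in [::]) => False_ind _ (notF H))) E.
by apply: (Phibad (adm1_adm Ah)); rewrite -E.
Qed.


Definition rm h := ccat (mkseq h (L h).-1) (drp (L h) h).

Lemma rm_sub h : sub (rm h) h.
Proof. apply: sub_ccat; [by move=> x /mem_mkseqP [i _ ->]; exists i|exact: sub_drp]. Qed.

Lemma rm_adm h : adm1 h -> adm1 (rm h).
Proof.
move=> Ah; have [I S] := Ah; apply: adm1_sub Ah _ (rm_sub h).
apply: inc_ccat; [exact: sorted_mkseq|move=> x /mem_mkseqP [i Hi ->]|exact: inc_drp].
rewrite /drp add0n; apply: inc_lt => //; apply: leq_trans Hi _; exact: leq_pred.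
Qed.

Lemma rm_agree h : agree (L h).-1 (rm h) h.
Proof.
move=> i Hi; rewrite /rm ccat_lt ?size_mkseq // nth_mkseq //.
Qed.

Lemma rm_nth h i : adm1 h -> (L h).-1 <= i -> rm h i = h i.+1.
Proof.
move=> Ah Hi; rewrite /rm /ccat size_mkseq ltnNge Hi /= /drp.
have Lp := Lpos Ah; by rewrite -[in X in _ + X](prednK Lp) addnS subnK.
Qed.

Lemma rm_cont h h' n : adm1 h -> adm1 h' -> agree n.+1 h h' -> L h' = L h -> agree n (rm h) (rm h').
Proof.
move=> Ah Ah' Ag EL i Hi.
case: (ltnP i (L h).-1) => H.
  have H' : i < (L h').-1 by rewrite EL.
  rewrite (@rm_agree h i H) (@rm_agree h' i H'); apply: Ag; exact: leqW.
have H' : (L h').-1 <= i by rewrite EL.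
by rewrite (rm_nth Ah H) (rm_nth Ah' H') Ag.
Qed.

Lemma sub_rm_drp h p : adm1 h -> p <= (L h).-1 -> sub (drp p (rm h)) (drp p h).
Proof.
move=> Ah Hp n; rewrite /drp.
case: (ltnP (n + p) (L h).-1) => H; first by exists n; rewrite (@rm_agree h _ H).
by exists n.+1; rewrite rm_nth // addSn.
Qed.

Lemma iter_adm h i : adm1 h -> adm1 (iter i rm h) /\ sub (iter i rm h) h.
Proof.
move=> Ah; elim: i => [|i [Ai Si]] /=; first by split => //; exact: sub_refl.
split; first exact: rm_adm.
exact: sub_trans (rm_sub _) Si.
Qed.

Lemma iter_agree h i : adm1 h -> agree (L h).-1 (iter i rm h) h /\ L h <= L (iter i rm h).
Proof.
move=> Ah; elim: i => [|i [Ag Le]] /=; first by split.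
have [Ai _] := iter_adm i Ah.
have pp : (L h).-1 <= (L (iter i rm h)).-1 by rewrite -!subn1 leq_sub2r.
have Ag' : agree (L h).-1 (rm (iter i rm h)) h.
  exact: agree_trans (agree_le pp (@rm_agree _)) Ag.
split => //; rewrite leqNgt; apply/negP => lt.
have Ar := rm_adm Ai.
have Ag2 : agree (L (rm (iter i rm h))) (rm (iter i rm h)) h.
  apply: agree_le Ag'; by rewrite -ltnS prednK ?Lpos.
by have := (Ldet Ar Ah Ag2).1 => E; move: lt; rewrite E ltnn.
Qed.

Lemma iter_tail h j : adm1 h -> 0 < j -> sub (drp (L h).-1 (iter j rm h)) (drp (L h) h).
Proof.
move=> Ah; case: j => // j _; elim: j => [|j IH].
  have -> : drp (L h).-1 (iter 1 rm h) = drp (L h) h.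
    by rewrite /= /rm -{1}(size_mkseq h (L h).-1) drp_ccat.
  exact: sub_refl.
apply: sub_trans IH; rewrite [iter j.+2 rm h]/=.
have [Ai _] := iter_adm j.+1 Ah; apply: sub_rm_drp => //.
have [_ Le] := iter_agree j.+1 Ah; by rewrite -!subn1 leq_sub2r.
Qed.

Lemma V_ex h j : adm1 h -> 0 < j ->
  exists V, adm1 V /\ sub V h /\ Phi V = Phi h /\ rm V = iter j rm h.
Proof.
move=> Ah j0; set W := iter j rm h.
have [AW SW] := iter_adm j Ah; have [AgW _] := iter_agree j Ah.
have tl := iter_tail Ah j0.
have [I S] := Ah; have Lp := Lpos Ah.
set p := (L h).-1 in AgW tl.
have Lh : L h = p.+1 by rewrite prednK.
set V := ccat (mkseq h p.+1) (drp p W).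
have AbV : above (mkseq h p.+1) (drp p W).
  move=> x /mem_mkseqP [i Hi ->]; have [m Em] := tl 0; rewrite Em /drp Lh.
  by apply: inc_lt => //; apply: leq_trans Hi _; rewrite addnS ltnS leq_addl.
have IV : inc V by apply: inc_ccat => //; [exact: sorted_mkseq|exact: inc_drp (proj1 AW)].
have SVh : sub V h.
  by apply: sub_ccat; [move=> x /mem_mkseqP [i _ ->]; exists i|exact: sub_trans (sub_drp _ _) SW].
have AV : adm1 V by apply: adm1_sub Ah IV SVh.
have AgV : agree (L h) h V.
  rewrite Lh; apply: agree_sym; rewrite -{1}(size_mkseq h p.+1); apply: agree_ccat.
  by rewrite size_mkseq.
have [LV PV] := Ldet Ah AV AgV.
exists V; split => //; split => //; split => //.
rewrite /rm LV -/p Lh.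
have -> : drp p.+1 V = drp p W by rewrite /V -{1}(size_mkseq h p.+1) drp_ccat.
have -> : mkseq V p = mkseq W p.
  rewrite (@agree_mkseq p V h) ?(@agree_mkseq p W h) //.
  by apply: agree_le (agree_sym AgV); rewrite Lh.
exact: ccat_mkseq.
Qed.


Lemma bad_false Y3 : inc Y3 -> sub Y3 Y1 ->
  (forall h, inc h -> sub h Y3 -> ~ le (Phi h) (Phi (rm h))) -> False.
Proof.
move=> I3 S3 H.
have A3 : adm1 Y3 by [].
have [i [j [ij Le]]] := wqo_good wq (fun i => Phi (iter i rm Y3)).
have [Ai Si] := iter_adm i A3.
have ji : 0 < j - i by rewrite subn_gt0.
have [V [AV [SV [PV RV]]]] := V_ex Ai ji.
apply: (H V (proj1 AV) (sub_trans SV Si)).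
rewrite PV RV -iterD subnK //; exact: ltnW.
Qed.

Lemma eq_false Y4 : inc Y4 -> sub Y4 Y1 ->
  (forall h, inc h -> sub h Y4 -> Phi h = Phi (rm h)) -> False.
Proof.
move=> I4 S4 H.
have A4 : adm1 Y4 by [].
have Lp := Lpos A4.
set n := (L Y4).-1.
have Lh : L Y4 = n.+1 by rewrite prednK.
have nL : n < L Y4 by rewrite Lh.
have key : forall z, inc z -> sub z (drp (L Y4) Y4) -> above (mkseq Y4 n) z ->
    Phi (ccat (mkseq Y4 n) z) = Phi Y4.
  move=> z Iz Sz Az.
  set V := ccat (mkseq Y4 (L Y4)) z.
  have AbV : above (mkseq Y4 (L Y4)) z.
    move=> x /mem_mkseqP [i Hi ->]; have [m Em] := Sz 0; rewrite Em /drp.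
    by apply: inc_lt => //; apply: leq_trans Hi _; rewrite leq_addl.
  have IV : inc V by apply: inc_ccat => //; exact: sorted_mkseq.
  have SV : sub V Y4.
    by apply: sub_ccat; [move=> x /mem_mkseqP [i _ ->]; exists i|exact: sub_trans Sz (sub_drp _ _)].
  have AV : adm1 V by apply: adm1_sub A4 IV SV.
  have AgV : agree (L Y4) Y4 V.
    apply: agree_sym; rewrite -{1}(size_mkseq Y4 (L Y4)); apply: agree_ccat.
    by rewrite size_mkseq.
  have [LV PV] := Ldet A4 AV AgV.
  have RV : rm V = ccat (mkseq Y4 n) z.
    rewrite /rm LV -/n.
    have -> : drp (L Y4) V = z by rewrite /V -{1}(size_mkseq Y4 (L Y4)) drp_ccat.
    rewrite (@agree_mkseq n V Y4) //.
    by apply: agree_le (agree_sym AgV); rewrite Lh.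
  by rewrite -RV -(H V IV SV) PV.
apply: (Lhered A4 nL (inc_drp _ I4) (sub_trans (sub_drp _ _) S4)).
  move=> x xu; apply: (@above_drp (L Y4) Y4 I4); by rewrite Lh mkseqS mem_rcons inE xu orbT.
move=> z z' Iz Iz' Sz Sz' Az Az'; by rewrite !key.
Qed.

Definition lb (x y : P) : bool := if excluded_middle_informative (le x y) then true else false.
Definition eqb (x y : P) : bool := if excluded_middle_informative (x = y) then true else false.
Lemma lbP x y : reflect (le x y) (lb x y).
Proof. by rewrite /lb; case: excluded_middle_informative => H; constructor. Qed.
Lemma eqbP x y : reflect (x = y) (eqb x y).
Proof. by rewrite /eqb; case: excluded_middle_informative => H; constructor. Qed.

Lemma cont2 Y0 : sub Y0 Y1 -> forall h, inc h -> sub h Y0 -> exists n, forall h', inc h' -> sub h' Y0 ->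
  agree n h h' -> (L h' <= L (fun i => h' i.+1)) = (L h <= L (fun i => h i.+1)).
Proof.
move=> S0 h I Sh; exists (maxn (L h) (L (fun i => h i.+1))).+1 => h' I' Sh' Ag.
have Ah : adm1 h by split => //; exact: sub_trans Sh S0.
have Ah' : adm1 h' by split => //; exact: sub_trans Sh' S0.
have As : adm1 (fun i => h i.+1) by apply: adm1_sub Ah (inc_shift I) (sub_shift _).
have As' : adm1 (fun i => h' i.+1) by apply: adm1_sub Ah' (inc_shift I') (sub_shift _).
have [E1 _] := Ldet Ah Ah' (agree_le (leqW (leq_maxl _ _)) Ag).
have Ag2 : agree (L (fun i => h i.+1)) (fun i => h i.+1) (fun i => h' i.+1).
  move=> i Hi; apply: Ag; rewrite ltnS; exact: leq_trans Hi (leq_maxr _ _).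
have [E2 _] := Ldet As As' Ag2.
by rewrite E1 E2.
Qed.

Lemma cont3 (G : P -> P -> bool) Y0 : sub Y0 Y1 -> forall h, inc h -> sub h Y0 -> exists n,
  forall h', inc h' -> sub h' Y0 -> agree n h h' -> G (Phi h') (Phi (rm h')) = G (Phi h) (Phi (rm h)).
Proof.
move=> S0 h I Sh; exists (maxn (L h) (L (rm h))).+1 => h' I' Sh' Ag.
have Ah : adm1 h by split => //; exact: sub_trans Sh S0.
have Ah' : adm1 h' by split => //; exact: sub_trans Sh' S0.
have [E1 P1] := Ldet Ah Ah' (agree_le (leqW (leq_maxl _ _)) Ag).
have Ag2 := rm_cont Ah Ah' Ag E1.
have [_ P2] := Ldet (rm_adm Ah) (rm_adm Ah') (agree_le (leq_maxr _ _) Ag2).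
by rewrite P1 P2.
Qed.

Lemma desc_false Y2 : inc Y2 -> sub Y2 Y1 ->
  (forall h, inc h -> sub h Y2 -> (L h <= L (fun i => h i.+1)) = false) -> False.
Proof.
move=> I2 S2 H.
have key : forall k, L (drp k Y2) + k <= L (drp 0 Y2).
  elim=> [|k IH]; first by rewrite addn0.
  apply: leq_trans IH; rewrite addnS -addSn leq_add2r.
  have := H (drp k Y2) (inc_drp _ I2) (sub_drp _ _).
  have -> : (fun i => drp k Y2 i.+1) = drp k.+1 Y2.
    by apply: functional_extensionality => i; rewrite /drp addnS addSn.
  by move/negbT; rewrite -ltnNge.
by have := key (L (drp 0 Y2)).+1; rewrite addnS ltnNge leq_addl.
Qed.


Lemma good_ex : exists Ys, inc Ys /\ sub Ys Y1 /\
  (forall h, inc h -> sub h Ys -> L h <= L (fun i => h i.+1)) /\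
  (forall h, inc h -> sub h Ys -> le (Phi h) (Phi (rm h)) /\ Phi h <> Phi (rm h)).
Proof.
have [Y2 [I2 [S2 [c2 H2]]]] := @NW Y1 IY1 (fun h => L h <= L (fun i => h i.+1)) (cont2 (sub_refl Y1)).
case: c2 H2 => H2; last by case: (desc_false I2 S2 H2).
have [Y3 [I3 [S3 [c3 H3]]]] := @NW Y2 I2 (fun h => lb (Phi h) (Phi (rm h))) (cont3 lb S2).
have S31 := sub_trans S3 S2.
case: c3 H3 => H3; last first.
  case: (bad_false I3 S31) => h Ih Sh; apply/lbP; by rewrite H3.
have [Y4 [I4 [S4 [c4 H4]]]] := @NW Y3 I3 (fun h => eqb (Phi h) (Phi (rm h))) (cont3 eqb S31).
have S41 := sub_trans S4 S31.
case: c4 H4 => H4.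
  by case: (eq_false I4 S41) => h Ih Sh; apply/eqbP; rewrite H4.
exists Y4; split => //; split => //; split.
  by move=> h Ih Sh; apply: H2 => //; exact: sub_trans Sh (sub_trans S4 S3).
move=> h Ih Sh; split.
  by apply/lbP; apply: H3 => //; exact: sub_trans Sh S4.
by move/eqbP; rewrite H4.
Qed.

Section S2.
Hypothesis bS : bqo (@dom_le P le).
Variable Ys : nat -> nat.
Hypothesis IYs : inc Ys.
Hypothesis SYs : sub Ys Y1.
Hypothesis HL : forall h, inc h -> sub h Ys -> L h <= L (fun i => h i.+1).
Hypothesis HP : forall h, inc h -> sub h Ys -> le (Phi h) (Phi (rm h)) /\ Phi h <> Phi (rm h).

Definition chain h n := Phi (iter n rm h).

Lemma chain_ok h : inc h -> sub h Ys -> forall n, le (chain h n) (chain h n.+1) /\ chain h n <> chain h n.+1.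
Proof.
move=> I S n; have Ah : adm1 h by split => //; exact: sub_trans S SYs.
have [[Ai _] Si] := iter_adm n Ah.
exact: HP Ai (sub_trans Si S).
Qed.

Definition chainS h : Somega le :=
  match excluded_middle_informative (inc h /\ sub h Ys) with
  | left H => exist _ (chain h) (chain_ok (proj1 H) (proj2 H))
  | right _ => exist _ (chain Ys) (chain_ok IYs (sub_refl Ys)) end.

Lemma chainS_val h : inc h -> sub h Ys -> proj1_sig (chainS h) = chain h.
Proof. by move=> I S; rewrite /chainS; case: excluded_middle_informative => // [[]]. Qed.

Definition DD s := B s /\ forall x, x \in s -> exists m, x = Ys m.
Definition hs s := ccat s (tailf Ys (last 0 s)).

Lemma hs_ok s : DD s -> inc (hs s) /\ sub (hs s) Ys.
Proof.
move=> [Bs Rs]; have ss := B_sorted Bs; split.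
  apply: inc_ccat => //; last exact: inc_tailf.
  move=> x xs; apply: leq_ltn_trans (le_last 0 ss xs) _; exact: tailf_gt.
apply: sub_ccat => //; exact: sub_tailf.
Qed.

Lemma Phi_hs s : DD s -> Phi (hs s) = f s.
Proof.
move=> Ds; have [I S] := hs_ok Ds; have [Bs _] := Ds.
have Ah : adm (hs s) by apply: adm1_adm; split => //; exact: sub_trans S SYs.
have [_ BK] := KP Ah.
have Bs' : B (mkseq (hs s) (size s)) by rewrite mkseq_ccat.
by rewrite /Phi (Kuniq I BK Bs') mkseq_ccat.
Qed.

Lemma DD_barrier : is_barrier DD.
Proof.
split; first by move=> s [Bs _]; exact: B_sorted.
split.
  move=> [l Hl].
  set M := sumn (flatten l).
  set h := tailf Ys M.
  have Ah : adm h by apply: adm1_adm; split; [exact: inc_tailf|exact: sub_trans (sub_tailf _ _) SYs].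
  have [K0 BK] := KP Ah.
  have Dh : DD (mkseq h (K h)).
    by split => // x /mem_mkseqP [i _ ->]; exists (i + M.+1).
  have h0 : h 0 \in mkseq h (K h) by apply/mem_mkseqP; exists 0.
  have : h 0 \in flatten l by apply/flattenP; exists (mkseq h (K h)) => //; exact: Hl.
  move/le_sumn; rewrite -/M leqNgt; by rewrite tailf_gt.
split; first by move=> s t [Bs _] [Bt _]; exact: B_anti.
move=> g Ig Hg.
have [k [k0 Bk]] : exists k, 0 < k /\ B (mkseq g k).
  apply: B_bar => // n; have [s [[Bs _] gs]] := Hg n; by exists s.
exists k; split => //; split => // x /mem_mkseqP [i _ ->].
by have [s [[_ Rs] gs]] := Hg i; apply: Rs.
Qed.

Theorem final_false : False.
Proof.
pose F s := chainS (hs s).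
have [s [t [Ds [Dt [[r [sr [[k [kr sk]] tb]]] Dm]]]]] := bS DD_barrier F.
have [Is Ss] := hs_ok Ds; have [It St] := hs_ok Dt.
have [j Le] := Dm 0.
rewrite /F !chainS_val // /chain /= Phi_hs // in Le.
set ht := hs t in It St Le.
set W := iter j rm ht in Le.
have [Bs _] := Ds; have [Bt Rt] := Dt.
have s0 := B_nonempty Bs; have t0 := B_nonempty Bt.
case: r sr kr sk tb => [//|x0 r'] sr kr sk /= tb; subst r'.
have k0 : 0 < k by move: s0; rewrite sk; case: k {kr sk}.
have ks : size s = k by rewrite sk size_takel // ltnW.
have Aht : adm1 ht by split => //; exact: sub_trans St SYs.
have [[IW _] SW] := iter_adm j Aht.
have [AgW _] := iter_agree j Aht.
have ht0 : x0 < ht 0.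
  rewrite /ht /hs ccat_lt //; move: sr t0; case: (t) => //= y t' /andP[+ _] _; done.
have x0W : x0 < W 0.
  have [m Em] := SW 0; have Em' : W 0 = ht m := Em.
  by rewrite Em'; apply: leq_trans ht0 (inc_le It (leq0n m)).
have x0R : exists m, x0 = Ys m.
  by apply: (proj2 Ds); rewrite sk; case: k k0 {kr sk ks} => //= k _; rewrite mem_head.
have above1 : forall z, x0 < z 0 -> above [:: x0] z by move=> z H x; rewrite inE => /eqP->.
have e1 : forall z i, ccat [:: x0] z i.+1 = z i by move=> z i; rewrite -addn1 (ccat_ge [:: x0] z i).
set h' := ccat [:: x0] W.
have Ih' : inc h' by apply: inc_ccat => //; exact: above1.
have Sh' : sub h' Ys.
  apply: sub_ccat; [by move=> x; rewrite inE => /eqP->|exact: sub_trans SW St].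
have Ah' : adm1 h' by split => //; exact: sub_trans Sh' SYs.
have sh' : (fun i => h' i.+1) = W.
  by apply: functional_extensionality => i; rewrite /h' -addn1 (ccat_ge [:: x0] W i).
have Bad := Phibad (adm1_adm Ah'); rewrite sh' in Bad.
set h0 := ccat [:: x0] ht.
have Ih0 : inc h0 by apply: inc_ccat => //; exact: above1.
have Sh0 : sub h0 Ys.
  apply: sub_ccat; [by move=> x; rewrite inE => /eqP->|exact: St].
have Ah0 : adm1 h0 by split => //; exact: sub_trans Sh0 SYs.
have sh0 : (fun i => h0 i.+1) = ht.
  by apply: functional_extensionality => i; rewrite /h0 -addn1 (ccat_ge [:: x0] ht i).
have L0 := HL Ih0 Sh0; rewrite sh0 in L0.
have Ag1 : agree (L h0) h0 h'.
  case=> [|i] Hi; first by rewrite /h0 /h' !ccat_lt.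
  rewrite /h0 /h' !e1; symmetry; apply: AgW.
  by rewrite -ltnS prednK ?Lpos //; apply: leq_trans Hi L0.
have [_ P1] := Ldet Ah0 Ah' Ag1.
have Ag2 : agree (K (hs s)) (hs s) h0.
  have Ahs : adm (hs s) by apply: adm1_adm; split => //; exact: sub_trans Ss SYs.
  have [_ BK] := KP Ahs.
  have Bs' : B (mkseq (hs s) (size s)) by rewrite mkseq_ccat.
  rewrite (Kuniq Is BK Bs') => i Hi.
  rewrite /hs ccat_lt // sk nth_take -?ks //.
  case: i Hi => [|i] Hi; first by rewrite /h0 ccat_lt.
  rewrite /h0 e1 /= /ht /hs ccat_lt //.
  by rewrite ks in Hi; rewrite ltnS in kr; exact: leq_trans (ltnW Hi) kr.
have P2 : Phi h0 = Phi (hs s).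
  apply: Phidet Ag2; apply: adm1_adm => //; split => //; exact: sub_trans Ss SYs.
by apply: Bad; rewrite P1 P2 Phi_hs.
Qed.
End S2.
End S1.

Lemma main_false (bS : bqo (@dom_le P le)) : False.
Proof.
have [Y1 [IY1 [SY1 D1]]] := fusion Qd_up inc_a.
have [Ys [IYs [SYs [HL HP]]]] := good_ex IY1 SY1 D1.
exact: (final_false SY1 bS IYs SYs HL HP).
Qed.
End Main.

Unset Implicit Arguments.
Theorem theorem1p1 (P : Type) (le : P -> P -> Prop)
  (le_refl : forall x, le x x)
  (le_trans : forall x y z, le x y -> le y z -> le x z)
  (le_anti : forall x y, le x y -> le y x -> x = y) :
  wqo le -> bqo (@dom_le P le) -> bqo le.
Proof.
move=> wq bS B bB f; apply: NNPP => ng.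
have badf : forall s t, B s -> B t -> tri s t -> ~ le (f s) (f t).
  by move=> s t Bs Bt st H; apply: ng; exists s, t.
exact: (main_false le_refl wq bB badf bS).
Qed.
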